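(* Let $n\ge2$ and let $S_1,\dots,S_n$ be isometries on an infinite-dimensional Hilbert space $H$ with $\sum_{i=1}^n S_iS_i^*=1_H$; let $O_n\subseteq B(H)$ be the C$^*$-algebra they generate. Let $\Phi_n(x)=\sum_{i=1}^n S_ixS_i^*$ and $\Psi_n(x)=\frac1n\sum_{i=1}^n S_i^*xS_i$ ($x\in O_n$); $\Psi_n$ is the adjoint of $\Phi_n$ with respect to the state $\phi_n$. Then: (i) $\Phi_n$ is not irreducible, i.e. $\Phi_n(O_n)'$ is not equal to the scalar operators $\mathbb{C}1_H$. (ii) $\Phi_n$ is an operational extreme point, but not a numerical operational extreme point, of the set of completely positive maps $O_n\to O_n$. (iii) $\Psi_n$ is not an operational extreme point of the set of completely positive maps $O_n\to O_n$; moreover, $\Psi_n$ is not a Jordan homomorphism.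
   Context: Commutants are taken in $B(H)$. $\mathrm{Ad}\, v(x)=vxv^*$. For the set $S$ of completely positive maps $O_n\to O_n$: a map $\Phi\in S$ is an operational extreme point of $S$ if whenever $\Phi=\sum_{i=1}^m\mathrm{Ad}\,a_i\circ\Psi_i$ with $\Psi_i\in S$ and nonzero $a_1,\dots,a_m\in O_n$ with $\sum_i a_ia_i^*=1$, there exist $z_i\in\Phi(O_n)'$ with $\mathrm{Ad}\,a_i\circ\Psi_i=z_i\Phi$ for all $i$; it is a numerical operational extreme point if in every such decomposition the $z_i$ can be taken to be nonnegative real scalars. A self-adjoint linear map $\Phi$ is a Jordan homomorphism if $\Phi(a^2)=\Phi(a)^2$ for all self-adjoint $a$. $\phi_n$ is the unique state on $O_n$ with $\phi_n(ab)=\phi_n(ba)$ for $a\in O_n$ and $b$ in the closed span of $\{S_\mu S_\nu^*: |\mu|=|\nu|\}$. *)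

(* Defs.v *)
From HB Require Import structures.
From mathcomp Require Import all_boot all_order all_algebra.
From mathcomp Require Import reals complex.
From Stdlib Require Import ClassicalEpsilon.

Set Implicit Arguments.
Unset Strict Implicit.
Unset Printing Implicit Defensive.

Import Order.TTheory GRing.Theory Num.Theory.
Local Open Scope ring_scope.

Section Hilbert.
Variable R : realType.
Local Notation C := (R[i]).
Variable V : lmodType C.
Variable ip : V -> V -> C.   (* inner product, linear in the first variable *)

Definition is_hilbert : Prop :=
  [/\ (forall (a : C) (x y z : V), ip (a *: x + y) z = a * ip x z + ip y z),
      (forall x y : V, ip x y = (ip y x)^*),
      (forall x : V, 0 <= ip x x),
      (forall x : V, ip x x = 0 -> x = 0) &
      (forall u : nat -> V,
         (forall eps : C, 0 < eps -> exists N : nat, forall m n : nat,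
             (N <= m)%N -> (N <= n)%N -> ip (u m - u n) (u m - u n) < eps) ->
         exists l : V, forall eps : C, 0 < eps -> exists N : nat, forall n : nat,
             (N <= n)%N -> ip (u n - l) (u n - l) < eps)].

Definition infinite_dim : Prop :=
  forall n : nat, exists v : 'I_n -> V, forall c : 'I_n -> C,
    \sum_(i < n) c i *: v i = 0 -> forall i, c i = 0.

Definition op := V -> V.

Definition linear_op (T : op) : Prop :=
  forall (a : C) (x y : V), T (a *: x + y) = a *: T x + T y.

Definition bounded_op (T : op) : Prop :=
  linear_op T /\ exists M : C, forall x : V, ip (T x) (T x) <= M * ip x x.

Definition is_adjoint (T T' : op) : Prop :=
  forall x y : V, ip (T x) y = ip x (T' y).

(* the Hilbert space adjoint T^* (exists for bounded T by Riesz) *)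
Definition adj (T : op) : op :=
  epsilon (inhabits (fun x : V => x)) (fun T' => is_adjoint T T').

Definition idop : op := fun x => x.
Definition addop (T U : op) : op := fun x => T x + U x.
Definition scaleop (c : C) (T : op) : op := fun x => c *: T x.
Definition mulop (T U : op) : op := fun x => T (U x).

(* ||T - U|| <= eps (operator norm), stated with squares *)
Definition op_close (T U : op) (eps : C) : Prop :=
  forall x : V, ip (T x - U x) (T x - U x) <= eps ^+ 2 * ip x x.

Definition closed_star_subalg (P : op -> Prop) : Prop :=
  (forall T, P T -> bounded_op T) /\
  [/\ (forall T U, P T -> P U -> P (addop T U)),
      (forall c T, P T -> P (scaleop c T)),
      (forall T U, P T -> P U -> P (mulop T U)),
      (forall T, P T -> P (adj T)) &
      (forall T, bounded_op T ->
         (forall eps : C, 0 < eps -> exists U, P U /\ op_close T U eps) -> P T)].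

Definition cstar_gen (I : Type) (S : I -> op) (T : op) : Prop :=
  forall P : op -> Prop, closed_star_subalg P -> (forall i, P (S i)) -> P T.

Definition eq_on (A : op -> Prop) (F G : op -> op) : Prop :=
  forall x, A x -> F x = G x.

Definition linear_on (A : op -> Prop) (F : op -> op) : Prop :=
  forall (c : C) x y, A x -> A y ->
    F (addop (scaleop c x) y) = addop (scaleop c (F x)) (F y).

Definition pos_mx (k : nat) (X : 'I_k -> 'I_k -> op) : Prop :=
  forall xi : 'I_k -> V, 0 <= \sum_(i < k) \sum_(j < k) ip (X i j (xi j)) (xi i).

Definition cp_map (A : op -> Prop) (F : op -> op) : Prop :=
  [/\ (forall x, A x -> A (F x)),
      linear_on A F &
      (forall (k : nat) (X : 'I_k -> 'I_k -> op),
         (forall i j, A (X i j)) -> pos_mx X -> pos_mx (fun i j => F (X i j)))].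

Definition commutant_range (A : op -> Prop) (F : op -> op) (z : op) : Prop :=
  bounded_op z /\ forall x, A x -> mulop z (F x) = mulop (F x) z.

Definition scalar_op (z : op) : Prop := exists c : C, z = scaleop c idop.

Definition Ad (a : op) (x : op) : op := mulop a (mulop x (adj a)).

Definition cp_decomposition (A : op -> Prop) (F : op -> op)
    (m : nat) (a : 'I_m -> op) (Psi : 'I_m -> op -> op) : Prop :=
  [/\ (forall i, cp_map A (Psi i)),
      (forall i, A (a i)),
      (forall i, a i <> (fun _ => 0)),
      (fun v => \sum_(i < m) a i (adj (a i) v)) = idop &
      eq_on A F (fun x v => \sum_(i < m) Ad (a i) (Psi i x) v)].

Definition operational_extreme (A : op -> Prop) (F : op -> op) : Prop :=
  cp_map A F /\
  forall (m : nat) (a : 'I_m -> op) (Psi : 'I_m -> op -> op),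
    cp_decomposition A F a Psi ->
    exists z : 'I_m -> op, forall i, commutant_range A F (z i) /\
      eq_on A (fun x => Ad (a i) (Psi i x)) (fun x => mulop (z i) (F x)).

Definition numerical_operational_extreme (A : op -> Prop) (F : op -> op) : Prop :=
  cp_map A F /\
  forall (m : nat) (a : 'I_m -> op) (Psi : 'I_m -> op -> op),
    cp_decomposition A F a Psi ->
    exists lam : 'I_m -> C, forall i, 0 <= lam i /\
      eq_on A (fun x => Ad (a i) (Psi i x)) (fun x => scaleop (lam i) (F x)).

Definition jordan_hom (A : op -> Prop) (F : op -> op) : Prop :=
  [/\ (forall x, A x -> F (adj x) = adj (F x)),
      linear_on A F &
      (forall x, A x -> adj x = x -> F (mulop x x) = mulop (F x) (F x))].

Definition PhiN (n : nat) (S : 'I_n -> op) (x : op) : op :=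
  fun v => \sum_(i < n) S i (x (adj (S i) v)).

Definition PsiN (n : nat) (S : 'I_n -> op) (x : op) : op :=
  fun v => (n%:R)^-1 *: \sum_(i < n) adj (S i) (x (S i v)).

End Hilbert.

(* Main.v *)
Require Import Defs.
From HB Require Import structures.
From mathcomp Require Import all_boot all_order all_algebra.
From mathcomp Require Import reals complex.
From mathcomp Require Import ring lra.
From mathcomp Require Import boolp classical_sets.
From Stdlib Require Import ClassicalEpsilon.
Import Order.TTheory GRing.Theory Num.Theory.
Local Open Scope ring_scope.
Set Implicit Arguments.
Unset Strict Implicit.
Unset Printing Implicit Defensive.

Section Scal.
Variable R : realType.
Local Notation C := R[i].

Lemma real_quad0 (r c : R) : (forall s : R, 0 <= s * r + s ^+ 2 * c) -> r = 0.
Proof.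
move=> H.
have H1 := H 1. have H2 := H (-1).
have hc : 0 < c + 1 by nra.
set u := (c + 1)^-1.
have hu : u * (c + 1) = 1 by rewrite mulVf // gt_eqF.
have hu0 : 0 < u by rewrite invr_gt0.
have := H (- r * u).
have -> : (- r * u) * r + (- r * u) ^+ 2 * c = - (r * u) ^+ 2.
  have huc : u * c = 1 - u by rewrite -hu; ring.
  transitivity (- (r ^+ 2 * u) + r ^+ 2 * u * (u * c)); first by ring.
  rewrite huc; ring.
move=> h.
have : r * u = 0 by nra.
move/eqP; rewrite mulf_eq0 (gt_eqF hu0) orbF => /eqP //.
Qed.

Lemma quad0 (A B c : C) :
  (forall t : C, 0 <= t^* * A + t * B + t * t^* * c) -> A = 0 /\ B = 0.
Proof.
case: A => a1 a2; case: B => b1 b2; case: c => c1 c2 H.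
have Hr s := H (Complex s 0).
have Hi s := H (Complex 0 s).
have E1 : forall s : R, 0 <= s * (a1 + b1) + s ^+ 2 * c1 /\ s * (a2 + b2) + s ^+ 2 * c2 = 0.
  move=> s; move: (Hr s); rewrite lecE /=. move=> /andP[/eqP h1 h2]. split; [nra|nra].
have E2 : forall s : R, 0 <= s * (a2 - b2) + s ^+ 2 * c1 /\ s * (b1 - a1) + s ^+ 2 * c2 = 0.
  move=> s; move: (Hi s); rewrite lecE /=. move=> /andP[/eqP h1 h2]. split; [nra|nra].
have r1 : a1 + b1 = 0 by apply: (@real_quad0 _ c1) => s; case: (E1 s).
have r2 : a2 - b2 = 0 by apply: (@real_quad0 _ c1) => s; case: (E2 s).
have [i1 _] := E1 1. have [_ i2] := E1 (-1). have [_ i3] := E2 1. have [_ i4] := E2 (-1).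
have ea1 : a1 = 0 by nra. have eb1 : b1 = 0 by nra.
have ea2 : a2 = 0 by nra. have eb2 : b2 = 0 by nra.
by rewrite ea1 ea2 eb1 eb2.
Qed.
End Scal.

Section Hil.
Variable R : realType.
Local Notation C := R[i].
Variable V : lmodType C.
Variable ip : V -> V -> C.
Hypothesis Hh : is_hilbert ip.

Lemma cD (a b : C) : (a + b)^* = a^* + b^*. Proof. exact: rmorphD. Qed.
Lemma cM (a b : C) : (a * b)^* = a^* * b^*. Proof. exact: rmorphM. Qed.
Lemma cN (a : C) : (- a)^* = - a^*. Proof. exact: rmorphN. Qed.
Lemma cB (a b : C) : (a - b)^* = a^* - b^*. Proof. exact: rmorphB. Qed.
Lemma c0 : (0 : C)^* = 0. Proof. exact: rmorph0. Qed.
Lemma c1 : (1 : C)^* = 1. Proof. exact: rmorph1. Qed.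
Lemma cK (a : C) : a^*^* = a. Proof. exact: conjCK. Qed.
Lemma cR (r : R) : (r%:C%C)^* = r%:C%C. Proof. by apply/eqP; rewrite eq_complex /= oppr0 !eqxx. Qed.

Lemma ip_lin a x y z : ip (a *: x + y) z = a * ip x z + ip y z.
Proof. by case: Hh. Qed.
Lemma ipJ x y : ip x y = (ip y x)^*.
Proof. by case: Hh. Qed.
Lemma ip_ge0 x : 0 <= ip x x.
Proof. by case: Hh. Qed.
Lemma ip_eq0 x : ip x x = 0 -> x = 0.
Proof. by case: Hh => _ _ _ h _; exact: h. Qed.

Lemma ip0l z : ip 0 z = 0.
Proof.
have := ip_lin 1 0 0 z; rewrite scaler0 addr0 mul1r => h.
by apply: (@addrI _ (ip 0 z)); rewrite -h addr0.
Qed.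
Lemma ipDl x y z : ip (x + y) z = ip x z + ip y z.
Proof. by rewrite -[x]scale1r ip_lin mul1r scale1r. Qed.
Lemma ipZl a x z : ip (a *: x) z = a * ip x z.
Proof. by rewrite -[a *: x]addr0 ip_lin ip0l addr0. Qed.
Lemma ipNl x z : ip (- x) z = - ip x z.
Proof. by rewrite -scaleN1r ipZl mulN1r. Qed.
Lemma ipBl x y z : ip (x - y) z = ip x z - ip y z.
Proof. by rewrite ipDl ipNl. Qed.
Lemma ipDr x y z : ip x (y + z) = ip x y + ip x z.
Proof. by rewrite ipJ ipDl cD -!ipJ. Qed.
Lemma ipZr a x z : ip x (a *: z) = a^* * ip x z.
Proof. by rewrite ipJ ipZl cM -!ipJ. Qed.
Lemma ip0r z : ip z 0 = 0.
Proof. by rewrite ipJ ip0l c0. Qed.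
Lemma ipNr x z : ip x (- z) = - ip x z.
Proof. by rewrite ipJ ipNl cN -ipJ. Qed.
Lemma ipBr x y z : ip x (y - z) = ip x y - ip x z.
Proof. by rewrite ipDr ipNr. Qed.
Lemma ip_suml k (F : 'I_k -> V) z : ip (\sum_(i < k) F i) z = \sum_(i < k) ip (F i) z.
Proof. exact: (big_morph (fun u => ip u z) (fun a b => ipDl a b z) (ip0l z)). Qed.
Lemma ip_sumr k (F : 'I_k -> V) z : ip z (\sum_(i < k) F i) = \sum_(i < k) ip z (F i).
Proof. exact: (big_morph (fun u => ip z u) (fun a b => ipDr z a b) (ip0r z)). Qed.

Lemma ip_extr x y : (forall z, ip z x = ip z y) -> x = y.
Proof.
move=> h; apply/eqP; rewrite -subr_eq0; apply/eqP/ip_eq0.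
by rewrite ipBr h subrr.
Qed.
Lemma ip_extl x y : (forall z, ip x z = ip y z) -> x = y.
Proof.
move=> h; apply: ip_extr => z; by rewrite ipJ h -ipJ.
Qed.

Definition nm x := complex.Re (ip x x).
Lemma ipN x : ip x x = (nm x)%:C%C.
Proof.
rewrite /nm; have := ip_ge0 x; case: (ip x x) => a b.
by rewrite lecE /= => /andP[/eqP -> _].
Qed.
Lemma nm_ge0 x : 0 <= nm x.
Proof. by have := ip_ge0 x; rewrite ipN lecR. Qed.
Lemma nm_eq0 x : nm x = 0 -> x = 0.
Proof. by move=> h; apply: ip_eq0; rewrite ipN h. Qed.

Definition nsq (A : C) := complex.Re A ^+ 2 + complex.Im A ^+ 2.

Lemma expand x y t : ip (x + t *: y) (x + t *: y) =
  ip x x + t^* * ip x y + t * (ip x y)^* + t * t^* * ip y y.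
Proof.
rewrite ipDl !ipDr !ipZl !ipZr [ip y x]ipJ; ring.
Qed.

Lemma CS x y : nsq (ip x y) <= nm x * nm y.
Proof.
have [ny0|Nyp] := eqVneq (nm y) 0.
  by rewrite ny0 (nm_eq0 ny0) ip0r /nsq /= mulr0 expr0n /= addr0.
have Nyg : 0 < nm y by rewrite lt_neqAle eq_sym Nyp nm_ge0.
set u := (nm y)^-1.
have hu : u * nm y = 1 by rewrite mulVf.
have hu0 : 0 < u by rewrite invr_gt0.
have := ip_ge0 (x + ((- u)%:C%C * ip x y) *: y).
rewrite expand !ipN /nsq.
case: (ip x y) => a b; rewrite lecE /= => /andP[_ h].
have hx := nm_ge0 x.
set q := a ^+ 2 + b ^+ 2.
have h1 : 0 <= nm x - 2 * u * q + (u ^+ 2 * nm y) * q by rewrite /q; lra.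
have e : u ^+ 2 * nm y = u by rewrite expr2 -mulrA hu mulr1.
rewrite e in h1.
have h2 : u * q <= nm x by lra.
have -> : q = nm y * (u * q) by rewrite mulrA [nm y * u]mulrC hu mul1r.
by rewrite mulrC ler_wpM2r // ltW.
Qed.
End Hil.

Section Riesz.
Variable R : realType.
Local Notation C := R[i].
Variable V : lmodType C.
Variable ip : V -> V -> C.
Hypothesis Hh : is_hilbert ip.
Local Notation nm := (nm ip).

Lemma ReD (a b : C) : complex.Re (a + b) = complex.Re a + complex.Re b.
Proof. by case: a; case: b. Qed.
Lemma ReJ (a : C) : complex.Re (a^*) = complex.Re a.
Proof. by case: a. Qed.

Lemma nsqC (A : C) : A * A^* = ((nsq A)%:C)%C.
Proof. case: A => a b; apply/eqP; rewrite eq_complex /nsq /=; apply/andP; split; apply/eqP; ring. Qed.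
Lemma nsq_ge0 (A : C) : 0 <= nsq A.
Proof. rewrite /nsq; apply: addr_ge0; exact: sqr_ge0. Qed.
Lemma nsq_eq0 (A : C) : nsq A = 0 -> A = 0.
Proof. case: A => a b; rewrite /nsq /= => h. move/eqP: h; rewrite paddr_eq0 ?sqr_ge0 // !sqrf_eq0 => /andP[/eqP -> /eqP ->] //. Qed.
Lemma nsqN (A : C) : nsq (- A) = nsq A.
Proof. case: A => a b; rewrite /nsq /=; ring. Qed.

Lemma nmD x y : nm (x + y) = nm x + nm y + 2 * complex.Re (ip x y).
Proof.
rewrite /nm (ipDl Hh) !(ipDr Hh) [ip y x](ipJ Hh) !ReD ReJ; lra.
Qed.
Lemma nmN x : nm (- x) = nm x.
Proof. by rewrite /nm (ipNl Hh) (ipNr Hh) opprK. Qed.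
Lemma nmZ a x : nm (a *: x) = nsq a * nm x.
Proof.
rewrite /nm (ipZl Hh) (ipZr Hh) (ipN Hh) mulrA nsqC /=.
by rewrite mulr0 subr0.
Qed.
Lemma ReN (a : C) : complex.Re (- a) = - complex.Re a.
Proof. by case: a. Qed.
Lemma nm_par x y : nm (x - y) + nm (x + y) = 2 * nm x + 2 * nm y.
Proof.
rewrite nmD nmD nmN (ipNr Hh) ReN; lra.
Qed.
Lemma nm_strick x y (s : R) : 0 < s -> nm (x + y) <= (1 + s) * nm x + (1 + s^-1) * nm y.
Proof.
move=> s0.
have h := nm_ge0 Hh (s%:C%C *: x - y).
rewrite nmD nmN nmZ (ipNr Hh) (ipZl Hh) ReN in h.
have e1 : complex.Re ((s%:C)%C * ip x y) = s * complex.Re (ip x y) by case: (ip x y) => a b /=; rewrite mul0r subr0.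
have e2 : nsq (s%:C)%C = s ^+ 2 by rewrite /nsq /= expr0n /= addr0.
rewrite e1 e2 in h.
rewrite nmD.
set r := complex.Re (ip x y).
have hx := nm_ge0 Hh x. have hy := nm_ge0 Hh y.
have hs : s * s^-1 = 1 by rewrite mulfV // gt_eqF.
have hsi : 0 < s^-1 by rewrite invr_gt0.
have h2 : 2 * r <= s * nm x + s^-1 * nm y.
  have h3 : s * (2 * r) <= s * (s * nm x + s^-1 * nm y).
    rewrite mulrDr [s * (s^-1 * _)]mulrA hs mul1r. nra.
  by rewrite ler_pM2l in h3.
lra.
Qed.
End Riesz.

Section RieszT.
Variable R : realType.
Local Notation C := R[i].
Variable V : lmodType C.
Variable ip : V -> V -> C.
Hypothesis Hh : is_hilbert ip.
Local Notation nm := (nm ip).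

Lemma small (eps : R) : 0 < eps -> exists N, forall n, (N <= n)%N -> (n.+1%:R : R)^-1 < eps.
Proof.
move=> e0; exists (Num.truncn eps^-1) => n hn.
have h := truncnS_gt eps^-1.
have h2 : (Num.truncn eps^-1).+1%:R <= n.+1%:R :> R by rewrite ler_nat ltnS.
rewrite -[eps]invrK ltf_pV2 ?posrE ?invr_gt0 ?ltr0Sn //.
exact: lt_le_trans h h2.
Qed.

Lemma e_le (m n : nat) : (m <= n)%N -> (n.+1%:R : R)^-1 <= (m.+1%:R)^-1.
Proof. move=> h; rewrite lef_pV2 ?posrE ?ltr0Sn // ler_nat ltnS //. Qed.

Lemma e_gt0 (n : nat) : 0 < (n.+1%:R : R)^-1.
Proof. by rewrite invr_gt0 ltr0Sn. Qed.

Lemma ltC (r : R) (eps : C) : 0 < eps -> r < complex.Re eps -> (r%:C)%C < eps.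
Proof. by case: eps => a b; rewrite !ltcE /= => /andP[/eqP -> _] ->; rewrite eqxx. Qed.

Lemma complete_nm (u : nat -> V) :
  (forall eps : R, 0 < eps -> exists N : nat, forall m n : nat,
      (N <= m)%N -> (N <= n)%N -> nm (u m - u n) < eps) ->
  exists l : V, forall eps : R, 0 < eps -> exists N : nat, forall n : nat,
      (N <= n)%N -> nm (u n - l) < eps.
Proof.
move=> hc.
have [_ _ _ _ hcomp] := Hh.
have [l hl] : exists l : V, forall eps : C, 0 < eps -> exists N : nat, forall n : nat,
             (N <= n)%N -> ip (u n - l) (u n - l) < eps.
  apply: hcomp => eps he.
  have he' : 0 < complex.Re eps by move: he; case: eps => a b; rewrite ltcE /= => /andP[_ ->].
  have [N hN] := hc _ he'.
  exists N => m n hm hn; rewrite (ipN Hh); apply: ltC => //; exact: hN.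
exists l => eps he.
have he2 : 0 < (eps%:C)%C :> C by rewrite ltcR.
have [N hN] := hl _ he2.
exists N => n hn; have := hN n hn; rewrite (ipN Hh) ltcR //.
Qed.

Lemma riesz (f : V -> C) : (forall a x y, f (a *: x + y) = a * f x + f y) ->
  (exists M : R, forall x, nsq (f x) <= M * nm x) -> exists w, forall x, f x = ip x w.
Proof.
move=> fl [M fb].
have f0 : f 0 = 0.
  have := fl 1 0 0; rewrite scaler0 addr0 mul1r => h.
  by apply: (@addrI _ (f 0)); rewrite -h addr0.
have fD x y : f (x + y) = f x + f y by rewrite -[x]scale1r fl mul1r scale1r.
have fZ a x : f (a *: x) = a * f x by rewrite -[a *: x]addr0 fl f0 addr0.
have fN x : f (- x) = - f x by rewrite -scaleN1r fZ mulN1r.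
have fB x y : f (x - y) = f x - f y by rewrite fD fN.
case: (pselect (exists x0, f x0 != 0)) => [[x0 fx0] | nf]; last first.
  exists 0 => x; rewrite (ip0r Hh).
  by case: (eqVneq (f x) 0) => // h; exfalso; apply: nf; exists x.
pose D : classical_sets.set R := fun r => exists k, f k = 0 /\ r = nm (x0 - k).
have hD : has_inf D.
  split; first by exists (nm (x0 - 0)); exists 0; split.
  by exists 0 => r [k [_ ->]]; exact: nm_ge0.
pose d := inf D.
have dlb k : f k = 0 -> d <= nm (x0 - k).
  by move=> fk; apply: (ge_inf hD.2); exists k.
have sq : forall n : nat, exists k, f k = 0 /\ nm (x0 - k) < d + (n.+1%:R)^-1.
  move=> n; have [r [k [fk ->]] hr] := inf_adherent (e_gt0 n) hD.
  by exists k.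
have [ks hks] := boolp.choice sq.
pose e (n : nat) := (n.+1%:R : R)^-1.
have cauchy m n : nm (ks m - ks n) <= 2 * e m + 2 * e n.
  have [fm hm] := hks m; have [fn hn] := hks n.
  pose mm := 2^-1 *: (ks n + ks m).
  have fmm : f mm = 0 by rewrite fZ fD fm fn addr0 mulr0.
  have hpar := nm_par Hh (x0 - ks n) (x0 - ks m).
  have e1 : x0 - ks n - (x0 - ks m) = ks m - ks n.
    by rewrite opprB addrC addrA subrK.
  have e2 : x0 - ks n + (x0 - ks m) = (x0 - mm) + (x0 - mm).
    rewrite addrACA [RHS]addrACA -!opprD; congr (_ - _).
    have h2 : ((2 : C)^-1 + 2^-1 : C) = 1 by rewrite [in RHS](splitr (1 : C)) mul1r.
    by rewrite /mm -scalerDl h2 scale1r.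
  rewrite e1 e2 (nmD Hh (x0 - mm)) in hpar.
  change (complex.Re (ip (x0 - mm) (x0 - mm))) with (nm (x0 - mm)) in hpar.
  have := dlb _ fmm.
  have hm' : nm (x0 - ks m) < d + e m by [].
  have hn' : nm (x0 - ks n) < d + e n by [].
  move: hm' hn' hpar; clear -e; move: (e m) (e n) => a b.
  move=> *; lra.
have [l hl] : exists l, forall eps : R, 0 < eps -> exists N : nat, forall n : nat,
      (N <= n)%N -> nm (ks n - l) < eps.
  apply: complete_nm => eps he.
  have he4 : 0 < eps / 4 by rewrite divr_gt0.
  have [N hN] := small he4.
  exists N => m n hm hn.
  have h3 := cauchy m n.
  have h1 : e m < eps / 4 by exact: hN m hm.
  have h2 : e n < eps / 4 by exact: hN n hn.
  have e4 : eps / 4 * 4 = eps by rewrite mulfVK // pnatr_eq0.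
  move: h1 h2 h3 e4; clear; move: (e m) (e n) (eps / 4) => a b c.
  move=> *; lra.
have fl0 : f l = 0.
  apply: (nsq_eq0 (R:=R)); apply/eqP; rewrite eq_le nsq_ge0 andbT.
  apply/ler_addgt0Pr => eps he; rewrite add0r.
  have hM : 0 < `|M| + 1 by rewrite ltr_wpDl.
  have he' : 0 < eps / (`|M| + 1) by rewrite divr_gt0.
  have [N hN] := hl _ he'.
  have hN' := hN N (leqnn N).
  have e1 : f l = - f (ks N - l) by rewrite fB (hks N).1 sub0r opprK.
  rewrite e1 nsqN.
  apply: (le_trans (fb _)).
  have hn0 := nm_ge0 Hh (ks N - l).
  have h1 : M * nm (ks N - l) <= (`|M| + 1) * nm (ks N - l).
    by apply: ler_wpM2r => //; apply: (le_trans (ler_norm M)); rewrite lerDl.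
  apply: (le_trans h1).
  have h2 : (`|M| + 1) * nm (ks N - l) <= (`|M| + 1) * (eps / (`|M| + 1)).
    by apply: ler_wpM2l; [exact: ltW | exact: ltW].
  apply: (le_trans h2).
  by rewrite mulrC mulfVK // gt_eqF.
have d0 : 0 <= d.
  apply: lb_le_inf; first by exists (nm (x0 - 0)); exists 0; split.
  by move=> r [k [_ ->]]; exact: nm_ge0.
have nz : nm (x0 - l) <= d.
  apply/ler_addgt0Pr => del hdel.
  have hd3 : 0 < del / 3 by rewrite divr_gt0.
  pose s := del / 3 / (d + 1).
  have hd1 : 0 < d + 1 by rewrite ltr_wpDl.
  have s0 : 0 < s by rewrite divr_gt0.
  have hs : s * (d + 1) = del / 3 by rewrite mulfVK // gt_eqF.
  have si0 : 0 < 1 + s^-1 by rewrite ltr_wpDr ?ltW ?invr_gt0.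
  pose ep := del / 3 / (1 + s^-1).
  have ep0 : 0 < ep by rewrite divr_gt0.
  have hep : ep * (1 + s^-1) = del / 3 by rewrite mulfVK // gt_eqF.
  have [N1 hN1] := hl _ ep0.
  have [N2 hN2] := small hd3.
  pose n := maxn N1 N2.
  have b1 := hN1 n (leq_maxl _ _).
  have b2 : e n < del / 3 by exact: hN2 n (leq_maxr _ _).
  have b3 : e n <= 1 by rewrite -[1]invr1; exact: (e_le (leq0n n)).
  have b4 : nm (x0 - ks n) < d + e n by exact: (hks n).2.
  have ex : x0 - l = (x0 - ks n) + (ks n - l) by rewrite addrA subrK.
  have := nm_strick Hh (x0 - ks n) (ks n - l) s0; rewrite -ex => hst.
  have A1 : (1 + s) * nm (x0 - ks n) <= (1 + s) * (d + e n).
    by apply: ler_wpM2l; [rewrite ltW // ltr_wpDl | exact: ltW].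
  have A2 : (1 + s^-1) * nm (ks n - l) <= (1 + s^-1) * ep.
    by apply: ler_wpM2l; [exact: ltW | exact: ltW].
  have A3 : s * e n <= s by rewrite -[X in _ <= X]mulr1; apply: ler_wpM2l => //; exact: ltW.
  have E : (1 + s) * (d + e n) = d + e n + (s * d + s * e n) by rewrite mulrDl mul1r mulrDr.
  rewrite E in A1.
  rewrite [(1 + s^-1) * ep]mulrC hep in A2.
  rewrite mulrDr mulr1 in hs.
  move: hst A1 A2 A3 hs b2; clear.
  move: (nm (x0 - l)) ((1 + s) * nm (x0 - ks n)) ((1 + s^-1) * nm (ks n - l)) (e n) (s * d) (s * e n) => *.
  lra.
pose z := x0 - l.
have orth k : f k = 0 -> ip z k = 0.
  move=> fk.
  have H t : 0 <= t^* * (- ip z k) + t * (- (ip z k)^*) + t * t^* * ip k k.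
    have h1 : f (l + t *: k) = 0 by rewrite fD fZ fk fl0 mulr0 addr0.
    have h2 := dlb _ h1.
    have e1 : x0 - (l + t *: k) = z + (- t) *: k by rewrite opprD addrA scaleNr.
    rewrite e1 in h2.
    have h3 : nm z <= nm (z + (- t) *: k) by exact: le_trans nz h2.
    rewrite -lecR -!(ipN Hh) (expand Hh) in h3.
    rewrite -subr_ge0 in h3.
    have -> : t^* * (- ip z k) + t * (- (ip z k)^*) + t * t^* * ip k k =
      ip z z + (- t)^* * ip z k + - t * (ip z k)^* + - t * (- t)^* * ip k k - ip z z.
      rewrite cN; ring.
    exact: h3.
  by have [/eqP + _] := quad0 H; rewrite oppr_eq0 => /eqP.
have fz : f z = f x0 by rewrite /z fB fl0 subr0.
have fz0 : f z != 0 by rewrite fz.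
have hzz : ip z z != 0.
  apply/eqP => /(ip_eq0 Hh) h; move: fz0; by rewrite h f0 eqxx.
have hzr : (ip z z)^* = ip z z by rewrite -(ipJ Hh).
exists ((f z / ip z z)^* *: z) => x.
rewrite (ipZr Hh) ?cK.
have hk : f (x - (f x / f z) *: z) = 0 by rewrite fB fZ mulfVK // subrr.
have := orth _ hk; rewrite (ipBr Hh) (ipZr Hh) => /eqP; rewrite subr_eq0 => /eqP hx.
rewrite (ipJ Hh x z) hx !cM !cK hzr.
by field; apply/andP; split.
Qed.
End RieszT.

Section Adj.
Variable R : realType.
Local Notation C := R[i].
Variable V : lmodType C.
Variable ip : V -> V -> C.
Hypothesis Hh : is_hilbert ip.
Local Notation nm := (nm ip).
Local Notation op := (op V).
Local Notation bounded := (bounded_op ip).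

Lemma ReMR (a : C) (r : R) : complex.Re (a * (r%:C)%C) = complex.Re a * r.
Proof. by case: a => a b /=; rewrite mulr0 subr0. Qed.

Lemma bnd_of (T : op) : bounded T -> exists M : R, 0 <= M /\ forall x, nm (T x) <= M * nm x.
Proof.
case=> _ [M hM]; exists `|complex.Re M|; split => // x.
have := hM x; rewrite !(ipN Hh) lecE => /andP[_ h].
rewrite ReMR /= in h; apply: (le_trans h); apply: ler_wpM2r; first exact: nm_ge0.
exact: ler_norm.
Qed.

Lemma bounded_of (T : op) : linear_op T -> (exists M : R, forall x, nm (T x) <= M * nm x) -> bounded T.
Proof.
move=> hl [M hM]; split => //; exists (M%:C)%C => x.
rewrite !(ipN Hh) lecE ReMR /=; apply/andP; split; [by rewrite mulr0 mul0r addr0 | exact: hM].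
Qed.

Lemma adj_ex (T : op) : bounded T -> exists T', is_adjoint ip T T'.
Proof.
move=> hT; have [M [M0 hM]] := bnd_of hT.
have hl := hT.1.
have H : forall y, exists w, forall x, ip (T x) y = ip x w.
  move=> y; apply: (riesz Hh).
    by move=> a x z; rewrite hl (ip_lin Hh).
  exists (M * nm y) => x.
  apply: (le_trans (CS Hh (T x) y)).
  rewrite mulrAC; apply: ler_wpM2r; first exact: nm_ge0.
  exact: hM.
have [T' hT'] := boolp.choice H.
by exists T' => x y; rewrite hT'.
Qed.

Lemma adjP (T : op) : bounded T -> is_adjoint ip T (adj ip T).
Proof. by move=> hT; rewrite /adj; apply: epsilon_spec; exact: adj_ex. Qed.

Lemma adj_uniq (T T1 T2 : op) : is_adjoint ip T T1 -> is_adjoint ip T T2 -> T1 = T2.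
Proof.
move=> h1 h2; apply: functional_extensionality_dep => y; apply: (ip_extr Hh) => x.
by rewrite -h1 -h2.
Qed.

Lemma adj_eq (T T' : op) : bounded T -> is_adjoint ip T T' -> adj ip T = T'.
Proof. by move=> hT h; apply: adj_uniq h; exact: adjP. Qed.

Lemma adj_sym (T T' : op) : is_adjoint ip T T' -> is_adjoint ip T' T.
Proof. by move=> h x y; rewrite (ipJ Hh) -h -(ipJ Hh). Qed.

Lemma adj_lin (T : op) : bounded T -> linear_op (adj ip T).
Proof.
move=> hT a x y; apply: (ip_extr Hh) => z.
by rewrite -(adjP hT) (ipDr Hh) (ipZr Hh) (ipDr Hh) (ipZr Hh) -!(adjP hT).
Qed.

Lemma adj_bnd (T : op) : bounded T -> bounded (adj ip T).
Proof.
move=> hT; apply: bounded_of; first exact: adj_lin.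
have [M [M0 hM]] := bnd_of hT.
exists M => y.
set w := adj ip T y.
have e : ip (T w) y = ip w w by rewrite (adjP hT).
have h1 := CS Hh (T w) y.
rewrite e (ipN Hh) /nsq /= expr0n /= addr0 in h1.
have h2 : nm (T w) * nm y <= M * nm w * nm y by apply: ler_wpM2r; [exact: nm_ge0 | exact: hM].
have hw := nm_ge0 Hh w. have hy := nm_ge0 Hh y.
have : nm w ^+ 2 <= nm w * (M * nm y) by rewrite mulrA [nm w * M]mulrC; exact: le_trans h1 h2.
rewrite /w; move: (nm (adj ip T y)) hw => a ha h.
have hMy : 0 <= M * nm y by exact: mulr_ge0.
nra.
Qed.

Lemma csa_bounded : closed_star_subalg ip bounded.
Proof.
split => //; split.
- move=> T U hT hU; apply: bounded_of.
    by move=> a x y; rewrite /addop hT.1 hU.1 scalerDr -!addrA; congr (_ + _); rewrite addrCA.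
  have [M1 [M10 h1]] := bnd_of hT; have [M2 [M20 h2]] := bnd_of hU.
  exists (2 * M1 + 2 * M2) => x; rewrite /addop.
  have := nm_par Hh (T x) (U x); have := nm_ge0 Hh (T x - U x).
  have := h1 x; have := h2 x; have := nm_ge0 Hh x.
  move: (nm x) (nm (T x)) (nm (U x)) (nm (T x - U x)) (nm (T x + U x)) => *; nra.
- move=> c T hT; apply: bounded_of.
    by move=> a x y; rewrite /scaleop hT.1 scalerDr !scalerA mulrC.
  have [M1 [M10 h1]] := bnd_of hT.
  exists (nsq c * M1) => x; rewrite /scaleop (nmZ Hh) -mulrA; apply: ler_wpM2l; first exact: nsq_ge0.
  exact: h1.
- move=> T U hT hU; apply: bounded_of.
    by move=> a x y; rewrite /mulop hU.1 hT.1.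
  have [M1 [M10 h1]] := bnd_of hT; have [M2 [M20 h2]] := bnd_of hU.
  exists (M1 * M2) => x; rewrite /mulop -mulrA; apply: (le_trans (h1 _)); apply: ler_wpM2l => //.
- by move=> T hT; exact: adj_bnd.
- by [].
Qed.
End Adj.

Section Main.
Variable R : realType.
Local Notation C := R[i].
Variable V : lmodType C.
Variable ip : V -> V -> C.
Variable n : nat.
Variable S : 'I_n -> op V.
Hypothesis Hh : is_hilbert ip.
Hypothesis Hn : (2 <= n)%N.
Hypothesis Hinf : infinite_dim V.
Hypothesis HSb : forall i, bounded_op ip (S i).
Hypothesis HSi : forall i, mulop (adj ip (S i)) (S i) = @idop R V.
Hypothesis HSs : (fun v => \sum_(i < n) S i (adj ip (S i) v)) = @idop R V.
Local Notation nm := (nm ip).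
Local Notation op := (op V).
Local Notation On := (cstar_gen ip S).
Local Notation Sa i := (adj ip (S i)).
Local Notation Phi := (PhiN ip S).
Local Notation id1 := (@idop R V).

Lemma linD (T : op) : linear_op T -> forall x y, T (x + y) = T x + T y.
Proof. by move=> hT x y; rewrite -[x]scale1r (hT _ _ _) !scale1r. Qed.
Lemma lin0 (T : op) : linear_op T -> T 0 = 0.
Proof.
move=> hT; have := hT 1 0 0; rewrite scaler0 addr0 scale1r => h.
by apply: (@addrI _ (T 0)); rewrite -h addr0.
Qed.
Lemma linZ (T : op) : linear_op T -> forall a x, T (a *: x) = a *: T x.
Proof. by move=> hT a x; rewrite -[a *: x]addr0 (hT _ _ _) lin0 // addr0. Qed.
Lemma linN (T : op) : linear_op T -> forall x, T (- x) = - T x.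
Proof. by move=> hT x; rewrite -scaleN1r linZ // scaleN1r. Qed.
Lemma lin_sum (T : op) k (F : 'I_k -> V) : linear_op T -> T (\sum_(j < k) F j) = \sum_(j < k) T (F j).
Proof. by move=> hT; apply: (big_morph T (linD hT) (lin0 hT)). Qed.

Lemma On_S i : On (S i). Proof. by move=> P _ h; exact: h. Qed.
Lemma On_add x y : On x -> On y -> On (addop x y).
Proof. by move=> hx hy P hP hS; have [_ [h _ _ _ _]] := hP; apply: h; [exact: hx | exact: hy]. Qed.
Lemma On_scale c x : On x -> On (scaleop c x).
Proof. by move=> hx P hP hS; have [_ [_ h _ _ _]] := hP; apply: h; exact: hx. Qed.
Lemma On_mul x y : On x -> On y -> On (mulop x y).
Proof. by move=> hx hy P hP hS; have [_ [_ _ h _ _]] := hP; apply: h; [exact: hx | exact: hy]. Qed.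
Lemma On_adj x : On x -> On (adj ip x).
Proof. by move=> hx P hP hS; have [_ [_ _ _ h _]] := hP; apply: h; exact: hx. Qed.
Lemma On_bnd x : On x -> bounded_op ip x.
Proof. by move=> hx; apply: hx; [exact: csa_bounded | exact: HSb]. Qed.
Lemma On_lin x : On x -> linear_op x.
Proof. by move=> hx; exact: (On_bnd hx).1. Qed.
Lemma On_adjP x : On x -> is_adjoint ip x (adj ip x).
Proof. by move=> hx; apply: adjP => //; exact: On_bnd. Qed.
Lemma On_adjP' x : On x -> is_adjoint ip (adj ip x) x.
Proof. by move=> hx; apply: adj_sym => //; exact: On_adjP. Qed.
Lemma On_adjK x : On x -> adj ip (adj ip x) = x.
Proof. move=> hx; apply: adj_eq => //; [exact: adj_bnd (On_bnd hx) | exact: On_adjP']. Qed.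

Definition i0 : 'I_n := Ordinal (ltnW Hn).
Definition i1 : 'I_n := Ordinal Hn.
Lemma i01 : i0 != i1. Proof. by []. Qed.

Lemma SaSS i w : Sa i (S i w) = w.
Proof. by have := congr1 (fun f => f w) (HSi i). Qed.

Lemma On_id : On id1.
Proof. rewrite -(HSi i0); apply: On_mul; [apply: On_adj|]; exact: On_S. Qed.

Lemma On_zero : On (fun _ => 0).
Proof.
have -> : (fun _ : V => 0 : V) = scaleop 0 id1 by apply: boolp.funext => v; rewrite /scaleop scale0r.
apply: On_scale; exact: On_id.
Qed.

Lemma On_sum k (F : 'I_k -> op) : (forall j, On (F j)) -> On (fun v => \sum_(j < k) F j v).
Proof.
elim: k F => [|k IH] F hF.
  have -> : (fun v => \sum_(j < 0) F j v) = fun _ => 0 by apply: boolp.funext => v; rewrite big_ord0.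
  exact: On_zero.
have -> : (fun v => \sum_(j < k.+1) F j v) =
   addop (fun v => \sum_(j < k) F (widen_ord (leqnSn k) j) v) (F ord_max).
  by apply: boolp.funext => v; rewrite big_ord_recr.
apply: On_add; last exact: hF.
by apply: IH => j; exact: hF.
Qed.

Lemma S_lin i : linear_op (S i). Proof. exact: (HSb i).1. Qed.
Lemma Sa_lin i : linear_op (Sa i). Proof. exact: (adj_lin Hh (HSb i)). Qed.
Lemma S_adj i x y : ip (S i x) y = ip x (Sa i y).
Proof. exact: (adjP Hh (HSb i)). Qed.
Lemma Sa_adj i x y : ip (Sa i x) y = ip x (S i y).
Proof. exact: (adj_sym Hh (adjP Hh (HSb i))). Qed.

Lemma SaS_ne i j w : i != j -> Sa i (S j w) = 0.
Proof.
move=> ij.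
set v := S j w.
have hv : \sum_(k < n) S k (Sa k v) = v by have := congr1 (fun f => f v) HSs.
have e1 : ip v v = \sum_(k < n) ip (Sa k v) (Sa k v).
  by rewrite -{1}hv (ip_suml Hh); apply: eq_bigr => k _; rewrite S_adj.
have e2 : ip v v = ip (Sa j v) (Sa j v) by rewrite /v S_adj SaSS.
rewrite e1 (bigD1 j) //= in e2.
have e3 : \sum_(k < n | k != j) ip (Sa k v) (Sa k v) = 0.
  by apply: (@addrI _ (ip (Sa j v) (Sa j v))); rewrite addr0.
have := psumr_eq0P (fun k _ => ip_ge0 Hh (Sa k v)) e3 ij.
exact: (ip_eq0 Hh).
Qed.

Lemma Phi_S x i w : linear_op x -> Phi x (S i w) = S i (x w).
Proof.
move=> hx; rewrite /PhiN (bigD1 i) //= SaSS big1 ?addr0 // => j ji.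
by rewrite SaS_ne // lin0 // lin0 //; exact: S_lin.
Qed.

Lemma Sa_Phi x i v : linear_op x -> Sa i (Phi x v) = x (Sa i v).
Proof.
move=> hx; rewrite /PhiN lin_sum; last exact: Sa_lin.
rewrite (bigD1 i) //= SaSS big1 ?addr0 // => j ji.
by rewrite SaS_ne // eq_sym.
Qed.

Lemma Phi_id : Phi id1 = id1.
Proof. exact: HSs. Qed.

Lemma Phi_mul x y : linear_op x -> linear_op y -> Phi (mulop x y) = mulop (Phi x) (Phi y).
Proof.
move=> hx hy; apply: boolp.funext => v; rewrite /mulop {2}/PhiN.
by apply: eq_bigr => j _; rewrite Sa_Phi.
Qed.

Lemma Phi_adj x u v : On x -> ip (Phi x u) v = ip u (Phi (adj ip x) v).
Proof.
move=> hx; rewrite /PhiN (ip_suml Hh) (ip_sumr Hh); apply: eq_bigr => j _.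
by rewrite S_adj (On_adjP hx) Sa_adj.
Qed.

Lemma Phi_On x : On x -> On (Phi x).
Proof.
move=> hx; apply: (On_sum (F := fun j => mulop (S j) (mulop x (Sa j)))) => j.
apply: On_mul; first exact: On_S.
apply: On_mul => //; apply: On_adj; exact: On_S.
Qed.

Lemma Phi_cp : cp_map ip On Phi.
Proof.
split.
- exact: Phi_On.
- move=> c x y hx hy; apply: boolp.funext => v.
  rewrite /PhiN /addop /scaleop scaler_sumr -big_split /=; apply: eq_bigr => j _.
  by rewrite (S_lin j).
- move=> k X hX hpos xi.
  have e : \sum_(a < k) \sum_(b < k) ip (Phi (X a b) (xi b)) (xi a) =
     \sum_(j < n) \sum_(a < k) \sum_(b < k) ip (X a b (Sa j (xi b))) (Sa j (xi a)).
    rewrite [RHS]exchange_big /=; apply: eq_bigr => a _.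
    rewrite [RHS]exchange_big /=; apply: eq_bigr => b _.
    rewrite /PhiN (ip_suml Hh); apply: eq_bigr => j _; exact: S_adj.
  rewrite e; apply: sumr_ge0 => j _; exact: (hpos (fun b => Sa j (xi b))).
Qed.

Lemma nonzero : exists w : V, w != 0.
Proof.
have [v hv] := (Hinf 1).
exists (v ord0); apply/eqP => h.
have := hv (fun _ => 1); rewrite big_ord1 scale1r h => /(_ erefl ord0) /eqP.
by rewrite oner_eq0.
Qed.

Lemma S_ne0 i w : w != 0 -> S i w != 0.
Proof.
move=> hw; apply/eqP => h; move/eqP: hw; apply.
by rewrite -(SaSS i w) h lin0 //; exact: (Sa_lin i).
Qed.

Lemma notscalar c : mulop (S i0) (Sa i0) <> scaleop c id1.
Proof.
move=> h; have [w hw] := nonzero.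
have h1 := congr1 (fun f => f (S i0 w)) h.
have h2 := congr1 (fun f => f (S i1 w)) h.
rewrite /= /mulop /scaleop /idop in h1 h2.
rewrite (SaS_ne _ i01) (lin0 (S_lin _)) in h2.
rewrite SaSS // in h1.
move/eqP: h2; rewrite eq_sym scaler_eq0 (negbTE (S_ne0 _ hw)) orbF => /eqP c0.
move: h1; rewrite c0 scale0r => /eqP; by rewrite (negbTE (S_ne0 _ hw)).
Qed.

Lemma z0_comm : commutant_range ip On Phi (mulop (S i0) (Sa i0)).
Proof.
split; first by apply: On_bnd; apply: On_mul; [exact: On_S | apply: On_adj; exact: On_S].
move=> x hx; apply: boolp.funext => v; rewrite /mulop.
by rewrite Sa_Phi ?Phi_S //; exact: On_lin.
Qed.

Lemma part1 : ~ (forall z, commutant_range ip On Phi z <-> scalar_op z).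
Proof.
move=> h; have [c hc] := (h _).1 z0_comm.
exact: (notscalar hc).
Qed.

Lemma S_nz i : S i <> (fun _ => 0).
Proof.
move=> h; have [w hw] := nonzero.
by move: (S_ne0 i hw); rewrite h eqxx.
Qed.

Lemma part2b : ~ numerical_operational_extreme ip On Phi.
Proof.
case=> _ h.
have hd : cp_decomposition ip On Phi S (fun _ x => x).
  split; [move=> i /=; split=> // | exact: On_S | exact: S_nz | exact: HSs | by []].
have [lam hl] := h _ _ _ hd.
have [_ e] := hl i0.
have := e id1 On_id; rewrite /= Phi_id => e'.
exact: (notscalar e').
Qed.

Lemma P0_adj j : adj ip (mulop (S j) (Sa j)) = mulop (S j) (Sa j).
Proof.
apply: adj_eq => //.
  by apply: On_bnd; apply: On_mul; [exact: On_S | apply: On_adj; exact: On_S].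
by move=> u v; rewrite /mulop S_adj Sa_adj.
Qed.

Lemma Psi_proj j v : PsiN ip S (mulop (S j) (Sa j)) v = (n%:R)^-1 *: v.
Proof.
rewrite /PsiN /mulop (bigD1 j) //= !SaSS big1 ?addr0 // => i ij.
by rewrite SaS_ne.
Qed.

Lemma nC0 : (n%:R : C) != 0.
Proof. by rewrite pnatr_eq0; case: n Hn. Qed.

Lemma Psi_id v : PsiN ip S id1 v = v.
Proof.
rewrite /PsiN /idop.
have -> : \sum_(i < n) Sa i (S i v) = v *+ n.
  by rewrite (eq_bigr (fun _ => v)) ?sumr_const ?card_ord // => i _; rewrite SaSS.
by rewrite -scalerMnr scalerMnl -mulr_natr mulVf ?nC0 // scale1r.
Qed.

Lemma part3b : ~ jordan_hom ip On (PsiN ip S).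
Proof.
case=> _ _ h.
set x := mulop (S i0) (Sa i0).
have hx : On x by apply: On_mul; [exact: On_S | apply: On_adj; exact: On_S].
have := h x hx (P0_adj i0).
have -> : mulop x x = x.
  by apply: boolp.funext => v; rewrite /x /mulop SaSS.
move=> e.
have [w hw] := nonzero.
have := congr1 (fun f => f w) e; rewrite /= /mulop !Psi_proj scalerA => /eqP.
rewrite -subr_eq0 -scalerBl scaler_eq0 (negbTE hw) orbF subr_eq0 => /eqP h2.
have : (n%:R : C)^-1 * (n%:R)^-1 * n%:R * n%:R = (n%:R)^-1 * n%:R * n%:R by rewrite -h2.
rewrite mulfVK ?nC0 // mulVf ?nC0 // mul1r => /eqP; rewrite eq_sym pnatr_eq1 => /eqP hn.
by move: Hn; rewrite hn.
Qed.

Lemma RCM (a b : R) : ((a%:C)%C * (b%:C)%C) = (((a * b)%:C)%C : C).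
Proof. by apply/eqP; rewrite eq_complex /= !mulr0 mul0r subr0 addr0 !eqxx. Qed.
Lemma RCD (a b : R) : ((((a + b)%:C)%C) : C) = (a%:C)%C + (b%:C)%C.
Proof. by apply/eqP; rewrite eq_complex /= addr0 !eqxx. Qed.
Lemma RCn (k : nat) : (((k%:R : R)%:C)%C : C) = k%:R.
Proof. elim: k => [|k IH] //; by rewrite !mulrS RCD IH. Qed.
Lemma RC0 (a : R) : (((a%:C)%C : C) == 0) = (a == 0).
Proof. by rewrite eq_complex /= eqxx andbT. Qed.
Lemma RCV (a : R) : ((((a^-1)%:C)%C) : C) = ((a%:C)%C)^-1.
Proof.
have [->|a0] := eqVneq a 0; first by rewrite invr0 /= invr0.
have ac0 : ((a%:C)%C : C) != 0 by rewrite RC0.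
have h : (a%:C)%C * ((a^-1)%:C)%C = 1 :> C by rewrite RCM mulfV.
by rewrite -[LHS]mul1r -(mulVf ac0) -mulrA h mulr1.
Qed.

Definition cc : C := (((Num.sqrt (n%:R : R))^-1)%:C)%C.
Lemma ccJ : cc^* = cc. Proof. exact: cR. Qed.
Lemma cc2 : cc * cc = (n%:R : C)^-1.
Proof.
rewrite /cc RCM -invfM -expr2 sqr_sqrtr ?ler0n // RCV RCn //.
Qed.
Lemma cc0 : cc != 0.
Proof.
apply/eqP => h; have := cc2; rewrite h mul0r => /eqP; rewrite eq_sym invr_eq0.
by rewrite (negbTE nC0).
Qed.

Definition ascal : op := scaleop cc id1.
Lemma On_ascal : On ascal. Proof. apply: On_scale; exact: On_id. Qed.
Lemma adj_ascal : adj ip ascal = ascal.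
Proof.
apply: adj_eq => //; first exact: On_bnd On_ascal.
by move=> u v; rewrite /ascal /scaleop /idop (ipZl Hh) (ipZr Hh) ccJ.
Qed.
Lemma ascal2 v : ascal (ascal v) = (n%:R)^-1 *: v.
Proof. by rewrite /ascal /scaleop /idop scalerA cc2. Qed.

Definition Psi_i (i : 'I_n) (x : op) : op := fun v => Sa i (x (S i v)).

Lemma Psi_i_cp i : cp_map ip On (Psi_i i).
Proof.
split.
- move=> x hx; change (On (mulop (Sa i) (mulop x (S i)))).
  apply: On_mul; [apply: On_adj; exact: On_S | apply: On_mul => //; exact: On_S].
- move=> c x y hx hy; apply: boolp.funext => v; rewrite /Psi_i /addop /scaleop.
  exact: (Sa_lin i).
- move=> k X hX hpos xi.
  have e : \sum_(a < k) \sum_(b < k) ip (Psi_i i (X a b) (xi b)) (xi a) =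
     \sum_(a < k) \sum_(b < k) ip (X a b (S i (xi b))) (S i (xi a)).
    by apply: eq_bigr => a _; apply: eq_bigr => b _; rewrite /Psi_i Sa_adj.
  rewrite e; exact: (hpos (fun b => S i (xi b))).
Qed.

Lemma sum_const_inv (v : V) : \sum_(i < n) (n%:R : C)^-1 *: v = v.
Proof.
rewrite sumr_const card_ord.
by rewrite scalerMnl -mulr_natr mulVf ?nC0 // scale1r.
Qed.

Lemma part3a : ~ operational_extreme ip On (PsiN ip S).
Proof.
case=> _ h.
have hd : cp_decomposition ip On (PsiN ip S) (fun _ => ascal) Psi_i.
  split.
  - exact: Psi_i_cp.
  - move=> _; exact: On_ascal.
  - move=> _ h0; have [w hw] := nonzero.
    have := congr1 (fun f => f w) h0; rewrite /ascal /scaleop /idop /= => /eqP.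
    by rewrite scaler_eq0 (negbTE cc0) (negbTE hw).
  - apply: boolp.funext => v; rewrite adj_ascal /idop.
    under eq_bigr => i _ do rewrite ascal2.
    exact: sum_const_inv.
  - move=> x hx; apply: boolp.funext => v; rewrite /PsiN /Ad /mulop adj_ascal scaler_sumr.
    apply: eq_bigr => i _.
    rewrite /Psi_i /ascal /scaleop /idop (linZ (S_lin i)) (linZ (On_lin hx)) (linZ (Sa_lin i)).
    by rewrite scalerA cc2.
have [z hz] := h _ _ _ hd.
have [_ e] := hz i0.
have hz1 v : z i0 v = (n%:R)^-1 *: v.
  have := congr1 (fun f => f v) (e id1 On_id).
  rewrite /= /mulop Psi_id /Ad /mulop adj_ascal /Psi_i /idop => <-.
  by rewrite SaSS ascal2.
have hx2 : On (mulop (S i1) (Sa i1)) by apply: On_mul; [exact: On_S | apply: On_adj; exact: On_S].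
have [w hw] := nonzero.
have := congr1 (fun f => f w) (e _ hx2).
rewrite /= /mulop Psi_proj hz1 /Ad /mulop adj_ascal /Psi_i.
have i10 : i1 != i0 by [].
rewrite (SaS_ne _ i10) (lin0 (S_lin i1)) (lin0 (Sa_lin i0)) /ascal /scaleop scaler0 => /eqP.
by rewrite eq_sym scalerA scaler_eq0 mulf_eq0 invr_eq0 (negbTE nC0) (negbTE hw).
Qed.

Section Ext.
Variables (m : nat) (a : 'I_m -> op) (Ps : 'I_m -> op -> op).
Hypothesis hd : cp_decomposition ip On Phi a Ps.

Definition th i x : op := Ad ip (a i) (Ps i x).

Lemma hcp i : cp_map ip On (Ps i). Proof. by case: hd. Qed.
Lemma hA i : On (a i). Proof. by case: hd. Qed.
Lemma heq : eq_on On Phi (fun x v => \sum_(i < m) Ad ip (a i) (Ps i x) v). Proof. by case: hd. Qed.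

Lemma th_On i x : On x -> On (th i x).
Proof.
move=> hx; apply: On_mul; first exact: hA.
apply: On_mul; last by apply: On_adj; exact: hA.
by have [h _ _] := hcp i; exact: h.
Qed.
Lemma th_lin i x : On x -> linear_op (th i x).
Proof. by move=> hx; apply: On_lin; exact: th_On. Qed.

Lemma sum_th y v : On y -> \sum_(i < m) th i y v = Phi y v.
Proof. by move=> hy; rewrite (heq hy). Qed.

Lemma th_pos i x (hx : On x) u w :
  0 <= ip (th i id1 u) u + ip (th i x w) u + ip (th i (adj ip x) u) w +
       ip (th i (mulop (adj ip x) x) w) w.
Proof.
pose X : 'I_2 -> 'I_2 -> op := fun p q =>
  if val p == 0%N then (if val q == 0%N then id1 else x)
  else (if val q == 0%N then adj ip x else mulop (adj ip x) x).
pose xi : 'I_2 -> V := fun q => if val q == 0%N then u else w.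
have hX p q : On (X p q).
  rewrite /X; case: ifP => _; case: ifP => _.
  - exact: On_id.
  - exact: hx.
  - exact: On_adj.
  - by apply: On_mul => //; exact: On_adj.
have hpos : pos_mx ip X.
  move=> ze; rewrite !big_ord_recl !big_ord0 /= !addr0.
  rewrite /X /=.
  have e1 : ip (adj ip x (ze ord0)) (ze (lift ord0 ord0)) = ip (ze ord0) (x (ze (lift ord0 ord0))).
    exact: (On_adjP' hx).
  have e2 : ip (mulop (adj ip x) x (ze (lift ord0 ord0))) (ze (lift ord0 ord0)) =
     ip (x (ze (lift ord0 ord0))) (x (ze (lift ord0 ord0))).
    exact: (On_adjP' hx).
  rewrite e1 e2.
  have := ip_ge0 Hh (ze ord0 + x (ze (lift ord0 ord0))).
  by rewrite (ipDl Hh) !(ipDr Hh) /idop addrACA.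
have [_ _ hc] := hcp i.
have := hc 2 X hX hpos (fun q => adj ip (a i) (xi q)).
rewrite /pos_mx !big_ord_recl !big_ord0 /= !addr0.
rewrite /th /Ad /mulop -!(On_adjP (hA i)) /X /xi /= !addrA.
done.
Qed.

Lemma th_zero i x (hx : On x) w :
  ip (th i id1 (- Phi x w)) (- Phi x w) + ip (th i x w) (- Phi x w) +
  ip (th i (adj ip x) (- Phi x w)) w + ip (th i (mulop (adj ip x) x) w) w = 0.
Proof.
have hxa := On_adj hx.
have hxx : On (mulop (adj ip x) x) by exact: On_mul.
set u := - Phi x w.
have hsum : \sum_(i < m) (ip (th i id1 u) u + ip (th i x w) u +
  ip (th i (adj ip x) u) w + ip (th i (mulop (adj ip x) x) w) w) = 0.
  rewrite !big_split /= -!(ip_suml Hh).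
  rewrite (sum_th _ On_id) (sum_th _ hx) (sum_th _ hxa) (sum_th _ hxx).
  rewrite Phi_id /idop (Phi_mul (On_lin hxa) (On_lin hx)) /mulop.
  rewrite (Phi_adj _ _ hxa) (Phi_adj _ _ hxa) (On_adjK hx) /u.
  by rewrite !(ipNl Hh) !(ipNr Hh) opprK subrr add0r addNr.
exact: (psumr_eq0P (fun i _ => th_pos i hx u w) hsum).
Qed.

Lemma perturb i x (hx : On x) w eta :
  ip (th i id1 (- Phi x w)) eta + ip (th i x w) eta = 0 /\
  ip (th i id1 eta) (- Phi x w) + ip (th i (adj ip x) eta) w = 0.
Proof.
apply: (quad0 (c := ip (th i id1 eta) eta)) => t.
have := th_pos i hx (- Phi x w + t *: eta) w.
rewrite (linD (th_lin _ On_id)) (linZ (th_lin _ On_id)).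
rewrite (linD (th_lin _ (On_adj hx))) (linZ (th_lin _ (On_adj hx))).
rewrite !(ipDl Hh) !(ipDr Hh) !(ipZl Hh) !(ipZr Hh).
set E := (X in 0 <= X) => h.
move: (th_zero i hx w); set Z := (X in X = 0) => hZ.
have -> : t^* * (ip (th i id1 (- Phi x w)) eta + ip (th i x w) eta) +
   t * (ip (th i id1 eta) (- Phi x w) + ip (th i (adj ip x) eta) w) +
   t * t^* * ip (th i id1 eta) eta = E - Z by rewrite /E /Z; ring.
by rewrite hZ subr0.
Qed.

Lemma th_eq1 i x (hx : On x) : th i x = mulop (th i id1) (Phi x).
Proof.
apply: boolp.funext => w.
set eta := th i id1 (- Phi x w) + th i x w.
have [hA _] := perturb i hx w eta.
rewrite -(ipDl Hh) in hA.
have := ip_eq0 Hh hA; rewrite (linN (th_lin _ On_id)) => h0.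
rewrite /mulop; apply/eqP; rewrite -subr_eq0; apply/eqP.
by rewrite -h0 addrC.
Qed.

Lemma th_eq2 i x (hx : On x) : th i x = mulop (Phi x) (th i id1).
Proof.
apply: boolp.funext => eta; apply: (ip_extl Hh) => w.
have [_ hB] := perturb i (On_adj hx) w eta.
move/eqP: hB; rewrite (On_adjK hx) (ipNr Hh) addrC subr_eq0 => /eqP hB.
by rewrite hB /mulop (Phi_adj _ _ hx).
Qed.
End Ext.

Lemma part2a : operational_extreme ip On Phi.
Proof.
split; first exact: Phi_cp.
move=> m a Ps hd.
exists (fun i => th a Ps i id1) => i; split.
  split; first by apply: On_bnd; apply: (th_On hd); exact: On_id.
  by move=> x hx; rewrite -(th_eq1 hd i hx) -(th_eq2 hd i hx).
by move=> x hx; exact: (th_eq1 hd i hx).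
Qed.
End Main.

Unset Implicit Arguments.

Theorem mainTheorem6 (R : realType) (V : lmodType R[i]) (ip : V -> V -> R[i])
  (n : nat) (S : 'I_n -> V -> V) :
  is_hilbert ip -> infinite_dim V -> (2 <= n)%N ->
  (forall i, bounded_op ip (S i)) ->
  (forall i, mulop (adj ip (S i)) (S i) = @idop R V) ->
  (fun v => \sum_(i < n) S i (adj ip (S i) v)) = @idop R V ->
  let On := cstar_gen ip S in
  [/\ ~ (forall z, commutant_range ip On (PhiN ip S) z <-> scalar_op z),
      operational_extreme ip On (PhiN ip S),
      ~ numerical_operational_extreme ip On (PhiN ip S),
      ~ operational_extreme ip On (PsiN ip S) &
      ~ jordan_hom ip On (PsiN ip S)].
Proof.
move=> Hh Hinf Hn HSb HSi HSs; cbv zeta.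
split.
- exact: part1.
- exact: part2a.
- exact: part2b.
- exact: part3a.
- exact: part3b.
Qed.
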